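(* Let $r\ge 1$ and $s\ge 1$ be integers and $n\ge 1$. Let $\lambda=\lambda(T_r(n))$, $\mu=\lambda(\overline{K}_s\vee T_r(n))$ and $d_0=2\bigl(e(T_r(n))-1\bigr)/n$. Then \[ \frac{n(\mu+d_0)}{\mu^2-\lambda^2}<\frac{\mu}{s}. \]
   Context: $\lambda(\cdot)$ is the spectral radius of the adjacency matrix and $e(\cdot)$ the number of edges. $T_r(n)$ is the complete $r$-partite graph on $n$ vertices with part sizes differing by at most one (for $r=1$, the edgeless graph). $\overline{K}_s$ is the edgeless graph on $s$ vertices and $\vee$ denotes the join. *)

(* Defs.v *)
From HB Require Import structures.
From mathcomp Require Import all_boot all_order all_algebra all_field.
Set Implicit Arguments. Unset Strict Implicit. Unset Printing Implicit Defensive.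
Import Order.TTheory GRing.Theory Num.Theory.
Local Open Scope ring_scope.

Definition adjmx (m : nat) (e : rel 'I_m) : 'M[algC]_m :=
  \matrix_(i, j) (e i j)%:R.

Definition is_spectral_radius (m : nat) (A : 'M[algC]_m) (rho : algC) : Prop :=
  (exists2 z : algC, eigenvalue A z & `|z| = rho) /\
  (forall z : algC, eigenvalue A z -> `|z| <= rho).

(* Turan graph T_r(n) on 'I_n: vertex i lies in part (i mod r); the parts
   have sizes differing by at most one; for r = 1 it is edgeless. *)
Definition turan_adj (r n : nat) : rel 'I_n :=
  fun i j => (i %% r)%N != (j %% r)%N.

Definition nedges (m : nat) (e : rel 'I_m) : nat :=
  #|[set p : 'I_m * 'I_m | (p.1 < p.2)%N && e p.1 p.2]|.

(* Join  \overline{K}_s \vee T_r(n)  on 'I_(s + n): vertices < s form the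
   independent set \overline{K}_s, vertices k >= s form T_r(n) via k - s. *)
Definition join_indep_turan_adj (s r n : nat) : rel 'I_(s + n) :=
  fun i j =>
    if (i < s)%N then (s <= j)%N
    else if (j < s)%N then true
    else ((i - s) %% r)%N != ((j - s) %% r)%N.

Arguments turan_adj r n : clear implicits.
Arguments join_indep_turan_adj s r n : clear implicits.

(* Main.v *)
Require Import Defs.
From HB Require Import structures.
From mathcomp Require Import all_boot all_order all_algebra all_field.
From mathcomp Require Import ring lra zify.
Set Implicit Arguments. Unset Strict Implicit. Unset Printing Implicit Defensive.
Import Order.TTheory GRing.Theory Num.Theory.
Local Open Scope ring_scope.
Lemma step_nat (n r k : nat) : (0 < r)%N -> (k < r)%N ->
  ((n.+1 %/ r) + (k < n.+1 %% r) = n %/ r + (k < n %% r) + (k == n %% r))%N.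
Proof.
move=> r0 kr.
rewrite modnS divnS //.
have := ltn_pmod n r0.
case: ifP => hd /= hl.
  have hm : (n %% r).+1 = r.
    have := divn_eq n r. move: hd => /dvdnP [q hq].
    move=> e. have : (n %% r).+1 = ((q - n %/ r) * r)%N by rewrite mulnBl -hq; lia.
    move=> e2. case: (q - n %/ r)%N e2 => [|[|x]] e2; lia.
  case: ltngtP => h /=; lia.
rewrite ltnS leq_eqVlt. case: ltngtP => h /=; lia.
Qed.

Lemma sum_mod (R : zmodType) (r n : nat) (g : nat -> R) : (0 < r)%N ->
  \sum_(i < n) g (i %% r)%N = \sum_(k < r) g k *+ (n %/ r + (k < n %% r))%N.
Proof.
move=> r0; elim: n => [|n IH].
  by rewrite big_ord0 big1 // => k _; rewrite div0n mod0n ltn0.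
rewrite big_ord_recr /= IH.
have nr : (n %% r < r)%N by rewrite ltn_pmod.
rewrite (bigD1 (Ordinal nr)) //= [in RHS](bigD1 (Ordinal nr)) //=.
rewrite step_nat // eqxx ltnn addn0 addn1 mulrS.
rewrite [in RHS](eq_bigr (fun k : 'I_r => g k *+ (n %/ r + (k < n %% r))%N)).
  by rewrite addrAC; congr (_ + _); exact: addrC.
move=> k hk; rewrite step_nat //.
have -> : (val k == n %% r)%N = false.
  by apply/negbTE; apply: contra hk => /eqP h; apply/eqP/val_inj.
by rewrite addn0.
Qed.
Lemma eig_bound m (A : 'M[algC]_m) (p : 'rV[algC]_m) (c z : algC) :
  (forall i j, A i j = A j i) -> (forall i j, 0 <= A i j) ->
  (forall i, 0 < p 0 i) -> p *m A = c *: p -> eigenvalue A z -> `|z| <= c.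
Proof.
move=> Asym Age0 ppos pE /eigenvalueP [v vE vn0].
have pre j : `|z| * `|v 0 j| <= \sum_i `|v 0 i| * A i j.
  have : z * v 0 j = \sum_i v 0 i * A i j.
    by have := congr1 (fun M : 'rV[algC]_m => M 0 j) vE; rewrite !mxE => <-.
  move=> e; rewrite -normrM e.
  apply: le_trans (ler_norm_sum _ _ _) _.
  apply: ler_sum => i _; rewrite normrM (ger0_norm (Age0 i j)) //.
have rowp i : \sum_j A i j * p 0 j = c * p 0 i.
  have := congr1 (fun M : 'rV[algC]_m => M 0 i) pE; rewrite !mxE => <-.
  by apply: eq_bigr => j _; rewrite Asym mulrC.
have [j vj] : exists j, v 0 j != 0.
  apply/existsP; apply: contraR vn0 => /existsPn h.
  by apply/eqP/rowP => k; rewrite mxE; apply/eqP; rewrite -[_ == _]negbK h.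
set W := \sum_j `|v 0 j| * p 0 j.
have Wpos : 0 < W.
  rewrite /W (bigD1 j) //=; apply: ltr_wpDr.
    by apply: sumr_ge0 => i _; rewrite mulr_ge0 // ltW.
  by rewrite mulr_gt0 // normr_gt0.
have : `|z| * W <= c * W.
  rewrite /W mulr_sumr.
  apply: (@le_trans _ _ (\sum_j (\sum_i `|v 0 i| * A i j) * p 0 j)).
    by apply: ler_sum => k _; rewrite mulrA ler_wpM2r // ltW.
  rewrite (eq_bigr (fun j => \sum_i `|v 0 i| * A i j * p 0 j)); last first.
    by move=> k _; rewrite mulr_suml.
  rewrite exchange_big /= mulr_sumr; apply: ler_sum => i _ /=.
  rewrite (eq_bigr (fun k => `|v 0 i| * (A i k * p 0 k))); last first.
    by move=> k _; rewrite mulrA.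
  by rewrite -mulr_sumr rowp mulrCA mulrA.
by rewrite ler_pM2r.
Qed.

Lemma spec_eq m (A : 'M[algC]_m) (p : 'rV[algC]_m) (c rho : algC) :
  (forall i j, A i j = A j i) -> (forall i j, 0 <= A i j) ->
  (forall i, 0 < p 0 i) -> p *m A = c *: p -> 0 <= c -> (0 < m)%N ->
  is_spectral_radius A rho -> rho = c.
Proof.
move=> Asym Age0 ppos pE c0 m0 [[z zE <-] Hall].
apply/eqP; rewrite eq_le; apply/andP; split; first exact: (eig_bound Asym).
rewrite -(ger0_norm c0); apply: Hall; apply/eigenvalueP; exists p => //.
apply/eqP => /rowP/(_ (Ordinal m0)); rewrite mxE => h.
by have := ppos (Ordinal m0); rewrite h ltxx.
Qed.
Lemma final_ineq (R : realFieldType) (a t r s n l m : R) :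
  0 <= a -> 0 <= t -> t + 1 <= r -> 1 <= s -> n = r * a + t -> 1 <= n ->
  l ^+ 2 = (n - 2 * a - 1) * l + (r - 1) * (a * (a + 1)) ->
  n - 2 * a - 1 <= 2 * l -> 0 <= l -> l < m ->
  m ^+ 3 = (n - 2 * a - 1) * m ^+ 2 + (r - 1) * (a * (a + 1)) * m + s * n * m
           + s * r * (a * (a + 1)) ->
  (0 <= n - 2 * a - 1 -> 0 <= (n - 2 * a - 1) * (2 + r * (a * (a + 1))) *
     (n * (n - 2 * a - 1) + r * (a * (a + 1))) -
     n * (n * (n - 2 * a - 1) - 4) * ((r - 1) * (a * (a + 1)))) ->
  (n - 2 * a - 1 < 0 -> r * (a * (a + 1)) = n * (l - (n - 2 * a - 1))) ->
  n * (m + (n ^+ 2 - t * (a + 1) ^+ 2 - (r - t) * a ^+ 2 - 2) / n) / (m ^+ 2 - l ^+ 2)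
    < m / s.
Proof.
move=> a0 t0 tr s1 nE n1 Hl Hcl l0 lm Hm Hv Hneg.
set c := n - 2 * a - 1 in Hl Hcl Hm Hv Hneg *.
set A := a * (a + 1) in Hl Hm Hv Hneg *.
have A0 : 0 <= A by rewrite /A; nra.
have D0 : 0 < m ^+ 2 - l ^+ 2 by nra.
have s0 : 0 < s by lra.
have n0 : 0 < n by lra.
have e2E : n ^+ 2 - t * (a + 1) ^+ 2 - (r - t) * a ^+ 2 = n * c + r * A.
  by rewrite /c /A nE; ring.
rewrite e2E.
have XE : n * (m + (n * c + r * A - 2) / n) = n * m + n * c + r * A - 2.
  by field; lra.
rewrite XE.
set h := m ^+ 2 - l * m - s * n.
have key1 : m * (m ^+ 2 - l ^+ 2) - s * (n * m + n * c + r * A - 2) = c * h + 2 * s.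
  rewrite /h; nra.
have key2 : h * (m + l - c) = s * (r * A - n * (l - c)).
  rewrite /h; nra.
have V0 : 0 <= c * (r * A - n * (l - c)) + 2 * (2 * l - c).
  have [cneg|cpos] := ltrP c 0.
    rewrite -Hneg // subrr mulr0 add0r; lra.
  have Zl : n * c + r * A <= n * l.
    rewrite leNgt; apply/negP => Hlt.
    have P1 : (n * c + r * A) ^+ 2 - c * n * (n * c + r * A) - n ^+ 2 * ((r - 1) * A)
                = A * (t * (t - r)) by rewrite /c /A nE; ring.
    have P2 : A * (t * (t - r)) <= 0.
      apply: mulr_ge0_le0 => //; nra.
    have P3 : (n * l) ^+ 2 - c * n * (n * l) - n ^+ 2 * ((r - 1) * A) = 0.
      have -> : (n * l) ^+ 2 = n ^+ 2 * l ^+ 2 by ring.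
      rewrite Hl; ring.
    have P4 : 0 < (n * c + r * A - n * l) * (n * c + r * A + n * l - c * n).
      apply: mulr_gt0; nra.
    have P5 : (n * c + r * A - n * l) * (n * c + r * A + n * l - c * n) =
      ((n * c + r * A) ^+ 2 - c * n * (n * c + r * A) - n ^+ 2 * ((r - 1) * A))
      - ((n * l) ^+ 2 - c * n * (n * l) - n ^+ 2 * ((r - 1) * A)) by ring.
    lra.
  have [l00|lpos] := eqVneq l 0.
    have c00 : c = 0 by move: Hcl; rewrite l00; lra.
    by rewrite c00; lra.
  have lp : 0 < l by rewrite lt_neqAle eq_sym lpos l0.
  have E : l * (c * (r * A - n * (l - c)) + 2 * (2 * l - c))
            = c * (2 + r * A) * l - (c * n - 4) * ((r - 1) * A).
    have -> : l * (c * (r * A - n * (l - c)) + 2 * (2 * l - c)) =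
      (4 - c * n) * l ^+ 2 + (c * r * A + c ^+ 2 * n - 2 * c) * l by ring.
    rewrite Hl; ring.
  have : 0 <= n * (l * (c * (r * A - n * (l - c)) + 2 * (2 * l - c))).
    rewrite E. have := Hv cpos.
    have : 0 <= c * (2 + r * A) * (n * l - (n * c + r * A)).
      apply: mulr_ge0; last lra. apply: mulr_ge0 => //. nra.
    nra.
  by rewrite (pmulr_rge0 _ n0) (pmulr_rge0 _ lp).
have hpos : 0 < c * h + 2 * s.
  have mlc : 0 < m + l - c by lra.
  suff : 0 < (c * h + 2 * s) * (m + l - c) by nra.
  have -> : (c * h + 2 * s) * (m + l - c) = s * (c * (r * A - n * (l - c)) + 2 * (2 * l - c)) + 2 * s * (m - l).
    by rewrite mulrDl -mulrA key2; ring.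
  nra.
rewrite ltr_pdivrMr // mulrAC ltr_pdivlMr //.
nra.
Qed.
Lemma vplus_ge (a t u : nat) :
  (4*t^2 + a*t*u + 5*a*t^2 <=
   2*t + 2*t^3 + 3*a*t + 5*a*t^2*u + 6*a*t^3)%N.
Proof.
case: t => [|t]; first by rewrite !muln0 !mul0n.
nia.
Qed.

Lemma v_ge0 (R : realFieldType) (a t u : nat) (r n c A : R) :
  r = (t + 1 + u)%:R -> n = r * a%:R + t%:R -> c = n - 2 * a%:R - 1 ->
  A = a%:R * (a%:R + 1) ->
  0 <= c * (2 + r * A) * (n * c + r * A) - n * (n * c - 4) * ((r - 1) * A).
Proof.
move=> rE nE cE AE.
have := vplus_ge a t u.
rewrite -(ler_nat R).
move=> H.
have -> : c * (2 + r * A) * (n * c + r * A) - n * (n * c - 4) * ((r - 1) * A) =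
  ((2*t + 2*t^3 + 3*a*t + 5*a*t^2*u + 6*a*t^3)%N%:R - (4*t^2 + a*t*u + 5*a*t^2)%N%:R) +
  (2*a^2*u + 2*a^2*u^2 + 4*a^2*t + 7*a^2*t*u + 5*a^2*t*u^2 + 2*a^2*t^2 + 10*a^2*t^2*u
   + 6*a^2*t^3 + 2*a^3*u + 4*a^3*u^2 + 2*a^3*u^3 + 3*a^3*t + 8*a^3*t*u + 5*a^3*t*u^2
   + 3*a^3*t^2 + 5*a^3*t^2*u + 2*a^3*t^3)%N%:R.
  rewrite cE AE nE rE. rewrite !natrD !natrM ?natrX ?natrXE. ring.
rewrite addr_ge0 //. by rewrite subr_ge0.
Qed.
Lemma sum_split (R : nmodType) (r t : nat) (F : bool -> R) : (t <= r)%N ->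
  \sum_(k < r) F (k < t)%N = F true *+ t + F false *+ (r - t).
Proof.
move=> tr.
rewrite -(big_mkord xpredT (fun k => F (k < t)%N)) (big_cat_nat (leq0n t) tr) /=.
rewrite (eq_big_nat _ _ (F2 := fun _ => F true)); last by move=> i /andP[_ ->].
rewrite (eq_big_nat _ _ (F2 := fun _ => F false) (m := t) (n := r)); last first.
  by move=> i /andP[ti _]; rewrite ltnNge ti.
by rewrite !sumr_const_nat subn0.
Qed.

Lemma sum_neq (R : pzRingType) (r : nat) (h : nat -> R) (k0 : nat) : (k0 < r)%N ->
  \sum_(k < r) h k * ((k != k0 :> nat) : nat)%:R = \sum_(k < r) h k - h k0.
Proof.
move=> kr.
rewrite (bigD1 (Ordinal kr)) //= [in RHS](bigD1 (Ordinal kr)) //= eqxx mulr0 add0r.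
rewrite addrAC subrr add0r; apply: eq_bigr => k hk.
have -> : (val k != k0) = true.
  by apply: contra hk => /eqP h1; apply/eqP/val_inj.
by rewrite mulr1.
Qed.

Definition msz (r n k : nat) : nat := (n %/ r + (k < n %% r))%N.

Lemma msz_pos (r n j : nat) : (0 < r)%N -> (j < n)%N -> (0 < msz r n (j %% r))%N.
Proof.
move=> r0 jn; rewrite /msz.
case: (posnP (n %/ r)) => [h|h]; last by rewrite addn_gt0 h.
have nr : (n < r)%N by rewrite -[r]mul1n -ltn_divLR // h.
by rewrite h add0n (modn_small nr) (modn_small (ltn_trans jn nr)) jn.
Qed.

Lemma sum_part (R : pzRingType) (r n : nat) (w : nat -> R) (P : nat -> bool) : (0 < r)%N ->
  \sum_(i < n) w (i %% r)%N * ((P (i %% r)%N) : nat)%:R =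
  \sum_(k < r) (msz r n k)%:R * w k * ((P k) : nat)%:R.
Proof.
move=> r0; rewrite (@sum_mod _ r n (fun k => w k * ((P k) : nat)%:R)) //.
by apply: eq_bigr => k _; rewrite -mulrA mulr_natl.
Qed.

Definition pT (r n : nat) (x : algC) : 'rV[algC]_n :=
  \row_(i < n) (x + (msz r n (i %% r))%:R)^-1.

Lemma T_eig (r n : nat) (x : algC) : (0 < r)%N -> 0 <= x ->
  \sum_(k < r) (msz r n k)%:R * (x + (msz r n k)%:R)^-1 = 1 ->
  pT r n x *m adjmx (turan_adj r n) = x *: pT r n x.
Proof.
move=> r0 x0 hS; apply/rowP => j; rewrite !mxE.
rewrite (eq_bigr (fun i : 'I_n => (x + (msz r n (i %% r))%:R)^-1 *
              ((((i %% r)%N != (j %% r)%N) : bool) : nat)%:R)); last first.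
  by move=> i _; rewrite !mxE.
rewrite (@sum_part _ r n (fun k => (x + (msz r n k)%:R)^-1) (fun k => (k != (j %% r)%N))) //.
rewrite (@sum_neq _ r (fun k => (msz r n k)%:R * (x + (msz r n k)%:R)^-1)) ?ltn_pmod //.
rewrite hS.
have mp : 0 < x + (msz r n (j %% r))%:R.
  by apply: ltr_wpDl => //; rewrite ltr0n msz_pos.
set m := (msz r n (j %% r))%:R in mp *.
apply: (mulIf (lt0r_neq0 mp)); rewrite -mulrA mulVf ?lt0r_neq0 // mulr1.
by rewrite mulrBl mul1r -mulrA mulVf ?lt0r_neq0 // mulr1 addrK.
Qed.

Definition pG (s r n : nat) (x : algC) : 'rV[algC]_(s + n) :=
  \row_(i < s + n) if (i < s)%N then (x + s%:R)^-1
                   else (x + (msz r n ((i - s) %% r))%:R)^-1.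

Lemma G_eig (s r n : nat) (x : algC) : (0 < r)%N -> (0 < s)%N -> 0 < x ->
  \sum_(k < r) (msz r n k)%:R * (x + (msz r n k)%:R)^-1 = x / (x + s%:R) ->
  pG s r n x *m adjmx (join_indep_turan_adj s r n) = x *: pG s r n x.
Proof.
move=> r0 s0 x0 hS; apply/rowP => j; rewrite !mxE big_split_ord /=.
have xs : 0 < x + s%:R by apply: ltr_pwDl.
have sumL : forall c : algC, \sum_(i < s) (x + s%:R)^-1 * c = s%:R * (x + s%:R)^-1 * c.
  by move=> c; rewrite sumr_const card_ord mulr_natl mulrnAl.
rewrite (eq_bigr (fun i : 'I_s => (x + s%:R)^-1 * (((s <= j)%N : bool) : nat)%:R)); last first.
  by move=> i _; rewrite !mxE /= /join_indep_turan_adj /= ltn_ord.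
rewrite sumL.
have rsh : forall i : 'I_n, (rshift s i < s)%N = false.
  by move=> i /=; rewrite ltnNge leq_addr.
have rsh2 : forall i : 'I_n, (rshift s i - s)%N = i by move=> i /=; rewrite addKn.
case: (ltnP j s) => js.
  rewrite (eq_bigr (fun i : 'I_n => (x + (msz r n (i %% r))%:R)^-1 * ((true : bool) : nat)%:R)); last first.
    by move=> i _; rewrite !mxE /join_indep_turan_adj rsh rsh2 js.
  rewrite (@sum_part _ r n (fun k => (x + (msz r n k)%:R)^-1) (fun k => true)) //.
  rewrite (eq_bigr (fun k : 'I_r => (msz r n k)%:R * (x + (msz r n k)%:R)^-1)); last first.
    by move=> k _; rewrite mulr1.
  by rewrite hS /= mulr0 add0r.
rewrite (eq_bigr (fun i : 'I_n => (x + (msz r n (i %% r))%:R)^-1 *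
   ((((i %% r)%N != ((j - s) %% r)%N) : bool) : nat)%:R)); last first.
  by move=> i _; rewrite !mxE /join_indep_turan_adj rsh rsh2 ltnNge js.
rewrite (@sum_part _ r n (fun k => (x + (msz r n k)%:R)^-1) (fun k => (k != ((j - s) %% r))%N)) //.
rewrite (@sum_neq _ r (fun k => (msz r n k)%:R * (x + (msz r n k)%:R)^-1)) ?ltn_pmod //.
rewrite hS mulr1.
have jn : (j - s < n)%N by rewrite ltn_subLR.
have mp : 0 < x + (msz r n ((j - s) %% r))%:R.
  by apply: ltr_pwDl => //; rewrite ltr0n msz_pos.
set m := (msz r n ((j - s) %% r))%:R in mp *.
have e1 : s%:R * (x + s%:R)^-1 + x / (x + s%:R) = 1.
  by field; rewrite lt0r_neq0.
rewrite addrA e1.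
apply: (mulIf (lt0r_neq0 mp)); rewrite -mulrA mulVf ?lt0r_neq0 // mulr1.
by rewrite mulrBl mul1r -mulrA mulVf ?lt0r_neq0 // mulr1 addrK.
Qed.
Lemma lam_props (R : rcfType) (a r n : R) :
  0 <= a -> 1 <= r ->
  let c := n - 2 * a - 1 in let k := (r - 1) * (a * (a + 1)) in
  let l := (c + Num.sqrt (c ^+ 2 + 4 * k)) / 2 in
  l ^+ 2 = c * l + k /\ c <= 2 * l /\ 0 <= l.
Proof.
move=> a0 r1 c k l.
have k0 : 0 <= k by rewrite /k; apply: mulr_ge0; nra.
have q0 := sqrtr_ge0 (c ^+ 2 + 4 * k).
have qq : Num.sqrt (c ^+ 2 + 4 * k) ^+ 2 = c ^+ 2 + 4 * k.
  by rewrite sqr_sqrtr //; nra.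
set q := Num.sqrt _ in q0 qq l *.
have qc1 : c <= q by nra.
have qc2 : - c <= q by nra.
rewrite /l; split; first by nra.
split; lra.
Qed.

Lemma S_lam (R : realFieldType) (a t r n l : R) :
  0 <= a -> 0 <= t -> t + 1 <= r -> n = r * a + t -> 1 <= n ->
  l ^+ 2 = (n - 2 * a - 1) * l + (r - 1) * (a * (a + 1)) -> 0 <= l ->
  (a = 0 -> l = t - 1) ->
  (a + 1) / (l + (a + 1)) * t + a / (l + a) * (r - t) = 1.
Proof.
move=> a0 t0 tr nE n1 Hl l0 Ha.
have [aE|ap] := eqVneq a 0.
  rewrite (Ha aE) aE mul0r mul0r addr0 add0r.
  have t1 : 1 <= t by move: n1; rewrite nE aE mulr0 add0r.
  field; lra.
have apos : 0 < a by rewrite lt_neqAle eq_sym ap a0.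
have d1 : l + (a + 1) != 0 by apply: lt0r_neq0; lra.
have d2 : l + a != 0 by apply: lt0r_neq0; lra.
have -> : (a + 1) / (l + (a + 1)) * t + a / (l + a) * (r - t) =
  ((a + 1) * t * (l + a) + a * (r - t) * (l + (a + 1))) / ((l + (a + 1)) * (l + a)).
  by field; rewrite d1 d2.
have E : (a + 1) * t * (l + a) + a * (r - t) * (l + (a + 1)) = (l + (a + 1)) * (l + a).
  rewrite nE in Hl; nra.
by rewrite E divff // mulf_neq0.
Qed.

Lemma S_mu (R : realFieldType) (a t r n s l m : R) :
  0 <= a -> 0 <= t -> t + 1 <= r -> n = r * a + t -> 1 <= s -> 0 <= l -> l < m ->
  m ^+ 3 = (n - 2 * a - 1) * m ^+ 2 + (r - 1) * (a * (a + 1)) * m + s * n * m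
           + s * r * (a * (a + 1)) ->
  (a + 1) / (m + (a + 1)) * t + a / (m + a) * (r - t) = m / (m + s).
Proof.
move=> a0 t0 tr nE s1 l0 lm Hm.
have d1 : m + (a + 1) != 0 by apply: lt0r_neq0; lra.
have d2 : m + a != 0 by apply: lt0r_neq0; lra.
have d3 : m + s != 0 by apply: lt0r_neq0; lra.
have -> : (a + 1) / (m + (a + 1)) * t + a / (m + a) * (r - t) =
  ((a + 1) * t * (m + a) + a * (r - t) * (m + (a + 1))) / ((m + (a + 1)) * (m + a)).
  by field; rewrite d1 d2.
apply/eqP; rewrite eqr_div ?mulf_neq0 //; apply/eqP.
rewrite nE in Hm; nra.
Qed.

Lemma mu_exists (R : rcfType) (a t r n s l : R) :
  0 <= a -> 0 <= t -> t + 1 <= r -> n = r * a + t -> 1 <= n -> 1 <= s ->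
  l ^+ 2 = (n - 2 * a - 1) * l + (r - 1) * (a * (a + 1)) ->
  n - 2 * a - 1 <= 2 * l -> 0 <= l -> (a = 0 -> l = t - 1) ->
  exists m, l < m /\ m ^+ 3 = (n - 2 * a - 1) * m ^+ 2 + (r - 1) * (a * (a + 1)) * m
                       + s * n * m + s * r * (a * (a + 1)).
Proof.
move=> a0 t0 tr nE n1 s1 Hl Hcl l0 Ha.
set c := n - 2 * a - 1 in Hl Hcl *.
set k := (r - 1) * (a * (a + 1)) in Hl *.
have k0 : 0 <= k by rewrite /k; apply: mulr_ge0; nra.
have lc : c <= l.
  case: (lerP c l) => // hcl.
  have : l * (l - c) = k by rewrite mulrBr -expr2 Hl; ring.
  nra.
pose Q : {poly R} := ('X^2 - c%:P * 'X - k%:P) * ('X + s%:P)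
                      - s%:P * ('X + a%:P) * ('X + (a + 1)%:P).
have QE x : Q.[x] = (x ^+ 2 - c * x - k) * (x + s) - s * (x + a) * (x + (a + 1)).
  by rewrite /Q !hornerE.
set x1 := l + 4 * s + a + 1.
have Q1 : 0 <= Q.[x1].
  rewrite QE.
  have f1 : x1 ^+ 2 - c * x1 - k = (x1 - l) * (x1 - c + l) by rewrite -[RHS]subr0; nra.
  rewrite f1.
  have h1 : 4 * s * x1 * x1 <= (x1 - l) * (x1 - c + l) * (x1 + s).
    have g1 : 4 * s <= x1 - l by rewrite /x1; lra.
    have g2 : x1 <= x1 - c + l by lra.
    have g3 : x1 <= x1 + s by lra.
    have x1p : 0 <= x1 by rewrite /x1; lra.
    have g4 : 4 * s * x1 <= (x1 - l) * (x1 - c + l) by nra.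
    nra.
  have h2 : s * (x1 + a) * (x1 + (a + 1)) <= 4 * s * x1 * x1.
    have g1 : x1 + a <= 2 * x1 by rewrite /x1; lra.
    have g2 : x1 + (a + 1) <= 2 * x1 by rewrite /x1; lra.
    have x1p : 0 <= x1 by rewrite /x1; lra.
    have g3 : (x1 + a) * (x1 + (a + 1)) <= 2 * x1 * (2 * x1) by nra.
    nra.
  lra.
have mid : forall x0, x0 <= x1 -> Q.[x0] < 0 -> l <= x0 ->
    exists m, l < m /\ Q.[m] = 0.
  move=> x0 x01 Q0 lx0.
  have [m /andP[m0 m1] rm] := @poly_ivt R Q x0 x1 x01 (introT andP (conj (ltW Q0) Q1)).
  exists m; split; last by apply/eqP.
  rewrite lt_neqAle (le_trans lx0 m0) andbT.
  apply/eqP => lm.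
  have x0E : x0 = m by apply/eqP; rewrite eq_le m0 -lm lx0.
  by move: rm; rewrite /root -x0E => /eqP h; move: Q0; rewrite h ltxx.
have [m [lm Qm]] : exists m, l < m /\ Q.[m] = 0.
  have [aE|ap] := eqVneq a 0.
    have lE := Ha aE.
    apply: (mid (l + 1 / 2)); first by rewrite /x1; lra.
      rewrite QE.
      have nt : n = t by rewrite nE aE mulr0 add0r.
      rewrite /k /c aE nt lE.
      have t1 : 1 <= t by rewrite -nt.
      set x := t - 1 + 1 / 2.
      have xp : 1 / 2 <= x by rewrite /x; lra.
      have -> : (x ^+ 2 - (t - 2 * 0 - 1) * x - (r - 1) * (0 * (0 + 1))) * (x + s) -
        s * (x + 0) * (x + (0 + 1)) = x * (x / 2 + s / 2 - s * x - s) by rewrite /x; field.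
      rewrite pmulr_rlt0; last lra.
      have : 0 <= (s - 1) * x by apply: mulr_ge0; lra.
      lra.
    lra.
  have apos : 0 < a by rewrite lt_neqAle eq_sym ap a0.
  apply: (mid l); first by rewrite /x1; lra.
    rewrite QE.
    have -> : l ^+ 2 - c * l - k = 0 by rewrite Hl; ring.
    rewrite mul0r sub0r oppr_lt0.
    apply: mulr_gt0; last lra. apply: mulr_gt0; lra.
  lra.
exists m; split => //.
move: Qm; rewrite QE => Qm.
rewrite /c /k in Qm *; nra.
Qed.
Lemma card_pairs (n : nat) (P : 'I_n -> 'I_n -> bool) :
  #|[set p : 'I_n * 'I_n | P p.1 p.2]| = (\sum_i \sum_j (P i j : nat))%N.
Proof.
rewrite -sum1_card pair_big /= big_mkcond /=.
by apply: eq_bigr => [[i j]] _; rewrite inE /=; case: (P i j).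
Qed.

Lemma two_edges (n : nat) (e : rel 'I_n) : (forall i j, e i j = e j i) ->
  (forall i, e i i = false) ->
  (2 * nedges e = \sum_i \sum_j (e i j : nat))%N.
Proof.
move=> esym eirr; rewrite /nedges (card_pairs (fun i j => (i < j)%N && e i j)) /=.
have split1 : forall i j, (e i j : nat) = (((i < j)%N && e i j : nat) + ((j < i)%N && e i j : nat))%N.
  move=> i j; case: (ltngtP i j) => h /=; rewrite ?addn0 ?add0n //.
  have ij : i = j by apply: val_inj.
  by rewrite ij eirr.
rewrite [in RHS](eq_bigr (fun i : 'I_n => \sum_(j < n) (((i < j)%N && e i j : nat) + ((j < i)%N && e i j : nat))%N));
  last by move=> i _; apply: eq_bigr => j _; apply: split1.
rewrite [in RHS](eq_bigr (fun i : 'I_n => \sum_(j < n) ((i < j)%N && e i j : nat) + \sum_(j < n) ((j < i)%N && e i j : nat))%N);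
  last by move=> i _; rewrite big_split.
rewrite big_split /= mul2n -addnn; congr addn.
rewrite exchange_big /=; apply: eq_bigr => i _; apply: eq_bigr => j _.
by rewrite esym.
Qed.

Lemma sum_msz (R : pzRingType) (r n : nat) : (0 < r)%N ->
  \sum_(k < r) (msz r n k)%:R = n%:R :> R.
Proof.
move=> r0.
have H := @sum_part R r n (fun _ => 1) (fun _ => true) r0.
transitivity (\sum_(k < r) (msz r n k)%:R * 1 * ((true : bool) : nat)%:R :> R).
  by apply: eq_bigr => k _; rewrite !mulr1.
by rewrite -H sumr_const card_ord mulr1.
Qed.

Lemma nedges_turan (R : pzRingType) (r n : nat) : (0 < r)%N ->
  (2 * nedges (turan_adj r n))%N%:R =
  n%:R * n%:R - \sum_(k < r) (msz r n k)%:R * (msz r n k)%:R :> R.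
Proof.
move=> r0.
rewrite two_edges; last 2 first.
- by move=> i j; rewrite /turan_adj eq_sym.
- by move=> i; rewrite /turan_adj eqxx.
rewrite natr_sum.
rewrite (eq_bigr (fun i : 'I_n => \sum_(k < r) (msz r n k)%:R - (msz r n (i %% r))%:R)); last first.
  move=> i _; rewrite natr_sum.
  rewrite (eq_bigr (fun j : 'I_n => 1 * (((j %% r)%N != (i %% r)%N : bool) : nat)%:R)); last first.
    by move=> j _; rewrite mul1r /turan_adj eq_sym.
  rewrite (@sum_part R r n (fun _ => 1) (fun k => k != (i %% r)%N)) //.
  rewrite (@sum_neq R r (fun k => (msz r n k)%:R * 1)) ?ltn_pmod //.
  by rewrite mulr1; congr (_ - _); apply: eq_bigr => k _; rewrite mulr1.
rewrite sumrB sumr_const card_ord sum_msz //.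
have H := @sum_part R r n (fun k => (msz r n k)%:R) (fun _ => true) r0.
have H2 : \sum_(i < n) (msz r n (i %% r))%:R = \sum_(k < r) (msz r n k)%:R * (msz r n k)%:R :> R.
  rewrite (eq_bigr (fun i : 'I_n => (msz r n (i %% r))%:R * ((true:bool):nat)%:R)); last by move=> i _; rewrite mulr1.
  by rewrite H; apply: eq_bigr => k _; rewrite mulr1.
by rewrite H2 mulr_natr.
Qed.
Lemma lam_a0 (R : rcfType) (a t r n : R) :
  a = 0 -> n = t -> 1 <= t ->
  let c := n - 2 * a - 1 in let k := (r - 1) * (a * (a + 1)) in
  (c + Num.sqrt (c ^+ 2 + 4 * k)) / 2 = t - 1.
Proof.
move=> a0 nt t1 c k.
have -> : k = 0 by rewrite /k a0 mul0r mulr0.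
rewrite mulr0 addr0 sqrtr_sqr ger0_norm; last by rewrite /c a0 nt; lra.
by rewrite /c a0 nt; field.
Qed.

Lemma lam_neg (R : rcfType) (a t r n : R) :
  0 <= a -> ((r = 1 /\ t = 0) \/ (r = 2 /\ t = 0)) -> n = r * a + t ->
  let c := n - 2 * a - 1 in let k := (r - 1) * (a * (a + 1)) in
  r * (a * (a + 1)) = n * ((c + Num.sqrt (c ^+ 2 + 4 * k)) / 2 - c).
Proof.
move=> a0 [[r1 t0]|[r2 t0]] nE c k.
  have -> : k = 0 by rewrite /k r1 subrr mul0r.
  rewrite mulr0 addr0 sqrtr_sqr ltr0_norm; last by rewrite /c nE r1 t0; lra.
  by rewrite /c nE r1 t0; ring.
have -> : c ^+ 2 + 4 * k = (2 * a + 1) ^+ 2 by rewrite /c /k nE r2 t0; ring.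
rewrite sqrtr_sqr ger0_norm; last by lra.
by rewrite /c nE r2 t0; field.
Qed.

Lemma sumS (r n : nat) (x : algC) : (0 < r)%N ->
  \sum_(k < r) (msz r n k)%:R * (x + (msz r n k)%:R)^-1 =
  ((n %/ r).+1)%:R / (x + ((n %/ r).+1)%:R) * (n %% r)%:R
  + (n %/ r)%:R / (x + (n %/ r)%:R) * (r - n %% r)%N%:R.
Proof.
move=> r0; rewrite /msz.
rewrite (@sum_split _ r (n %% r) (fun b => (n %/ r + b)%N%:R * (x + (n %/ r + b)%N%:R)^-1));
  last by rewrite ltnW // ltn_pmod.
by rewrite !mulr_natr addn1 addn0.
Qed.

Lemma small_r (a r t n : nat) : n = (a * r + t)%N -> (t < r)%N -> (0 < n)%N ->
  (n < 2 * a + 1)%N -> (r = 1 /\ t = 0 \/ r = 2 /\ t = 0)%N.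
Proof.
move=> nE tr n0 nlt.
have r2 : (r <= 2)%N by nia.
case: r r2 tr nE => [|[|[|r']]] //= _ tr nE.
  by left; split => //; lia.
by right; split => //; lia.
Qed.

Unset Implicit Arguments.

Theorem lemma3p4 (r s n : nat) (hr : (1 <= r)%N) (hs : (1 <= s)%N) (hn : (1 <= n)%N)
  (lam mu : algC) :
  is_spectral_radius (adjmx (turan_adj r n)) lam ->
  is_spectral_radius (adjmx (join_indep_turan_adj s r n)) mu ->
  let d0 : algC := 2 * ((nedges (turan_adj r n))%:R - 1) / n%:R in
  n%:R * (mu + d0) / (mu ^+ 2 - lam ^+ 2) < mu / s%:R.
Proof.
move=> Hlam Hmu /=.
have r0 : (0 < r)%N := hr.
have nE : n = (n %/ r * r + n %% r)%N := divn_eq n r.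
have tr : (n %% r < r)%N := ltn_pmod n r0.
set a := (n %/ r)%N in nE *.
set t := (n %% r)%N in nE tr *.
pose aR : algR := a%:R. pose tR : algR := t%:R. pose rR : algR := r%:R.
pose nR : algR := n%:R. pose sR : algR := s%:R.
have a0 : 0 <= aR := ler0n _ _.
have t0 : 0 <= tR := ler0n _ _.
have trR : tR + 1 <= rR by rewrite /tR /rR natr1 ler_nat.
have r1 : 1 <= rR by rewrite /rR ler1n.
have s1 : 1 <= sR by rewrite /sR ler1n.
have n1 : 1 <= nR by rewrite /nR ler1n.
have nER : nR = rR * aR + tR by rewrite /nR /rR /aR /tR {1}nE natrD natrM mulrC.
pose c := nR - 2 * aR - 1.
pose k := (rR - 1) * (aR * (aR + 1)).
pose l := (c + Num.sqrt (c ^+ 2 + 4 * k)) / 2.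
have [Hl [Hcl l0]] : l ^+ 2 = c * l + k /\ c <= 2 * l /\ 0 <= l := lam_props nR a0 r1.
have Ha : aR = 0 -> l = tR - 1.
  move=> aE; have nt : nR = tR by rewrite nER aE mulr0 add0r.
  by apply: lam_a0 => //; rewrite -nt.
have [m [lm Hm]] := mu_exists a0 t0 trR nER n1 s1 Hl Hcl l0 Ha.
have Hneg : c < 0 -> rR * (aR * (aR + 1)) = nR * (l - c).
  move=> cneg.
  have nlt : (n < 2 * a + 1)%N.
    rewrite -(ltr_nat algR) natrD natrM.
    move: cneg; rewrite /c /nR /aR; lra.
  have rt : (r = 1 /\ t = 0 \/ r = 2 /\ t = 0)%N.
    exact: (small_r nE tr hn nlt).
  apply: (@lam_neg _ aR tR rR nR a0 _ nER).
  by case: rt => [[re te]|[re te]]; [left|right]; rewrite /rR /tR te re.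
clearbody l.
have lvE : 0 <= algRval l := l0.
have HST : \sum_(k < r) (msz r n k)%:R * (algRval l + (msz r n k)%:R)^-1 = 1.
  rewrite sumS //.
  have H := S_lam a0 t0 trR nER n1 Hl l0 Ha.
  transitivity (algRval ((aR + 1) / (l + (aR + 1)) * tR + aR / (l + aR) * (rR - tR)));
    last by rewrite H rmorph1.
  rewrite /aR /tR /rR.
  rewrite !(rmorphD, rmorphM, fmorphV, rmorphB, rmorph_nat, rmorph1) /=.
  by rewrite ?rmorphN ?rmorph_nat -natr1 (natrB _ (ltnW tr)).
have lamE : lam = algRval l.
  apply: (spec_eq _ _ _ (T_eig r0 lvE HST) lvE hn Hlam).
  - by move=> i j; rewrite !mxE /turan_adj eq_sym.
  - by move=> i j; rewrite mxE ler0n.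
  - move=> i; rewrite mxE invr_gt0; apply: ltr_wpDl lvE _.
    by rewrite ltr0n msz_pos.
have mpos : 0 < m by apply: le_lt_trans l0 lm.
have mvE : 0 < algRval m := mpos.
have HSG : \sum_(k < r) (msz r n k)%:R * (algRval m + (msz r n k)%:R)^-1
           = algRval m / (algRval m + s%:R).
  rewrite sumS //.
  have H := S_mu a0 t0 trR nER s1 l0 lm Hm.
  transitivity (algRval ((aR + 1) / (m + (aR + 1)) * tR + aR / (m + aR) * (rR - tR)));
    last by rewrite H /sR !(rmorphD, rmorphM, fmorphV, rmorph_nat).
  rewrite /aR /tR /rR.
  rewrite !(rmorphD, rmorphM, fmorphV, rmorphB, rmorph_nat, rmorph1) /=.
  by rewrite ?rmorphN ?rmorph_nat -natr1 (natrB _ (ltnW tr)).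
have muE : mu = algRval m.
  have sn0 : (0 < s + n)%N by rewrite addn_gt0 hs.
  apply: (spec_eq _ _ _ (G_eig r0 hs mvE HSG) (ltW mvE) sn0 Hmu).
  - move=> i j; rewrite !mxE /join_indep_turan_adj.
    by case: (ltnP i s) => hi; case: (ltnP j s) => hj //=; rewrite eq_sym.
  - by move=> i j; rewrite mxE ler0n.
  - move=> i; rewrite mxE; case: ifP => _; rewrite invr_gt0.
      by apply: ltr_pwDl => //; rewrite ltr0n.
    by apply: ltr_pwDl => //.
have E : 2 * ((nedges (turan_adj r n))%:R - 1) =
    n%:R ^+ 2 - t%:R * (a%:R + 1) ^+ 2 - (r%:R - t%:R) * a%:R ^+ 2 - 2 :> algC.
  have H := @nedges_turan algC r n r0.
  have H2 : \sum_(k < r) (msz r n k)%:R * (msz r n k)%:R =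
            t%:R * (a%:R + 1) ^+ 2 + (r%:R - t%:R) * a%:R ^+ 2 :> algC.
    rewrite /msz (@sum_split _ r t (fun b => (a + b)%N%:R * (a + b)%N%:R));
      last exact: ltnW.
    rewrite -(natrB _ (ltnW tr)) addn1 addn0 -natr1 !mulr_natl.
    by rewrite !expr2 -[a%:R *+ a]mulr_natr.
  rewrite mulrBr mulr1 -[2 * _](natrM algC 2) H H2 expr2; ring.
have Hv : 0 <= c -> 0 <= c * (2 + rR * (aR * (aR + 1))) * (nR * c + rR * (aR * (aR + 1))) -
     nR * (nR * c - 4) * ((rR - 1) * (aR * (aR + 1))).
  move=> _; apply: (@v_ge0 algR a t (r - t - 1)%N) => //.
  by rewrite /rR; congr (_ %:R); lia.
have Final := final_ineq a0 t0 trR s1 nER n1 Hl Hcl l0 lm Hm Hv Hneg.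
rewrite lamE muE /= E.
move: Final; rewrite -[_ < _]/(algRval _ < algRval _).
rewrite /nR /aR /tR /rR /sR.
rewrite !(rmorphD, rmorphM, fmorphV, rmorphB, rmorph_nat, rmorph1, rmorphXn, rmorphN) /=.
by rewrite ?rmorphN ?rmorph_nat.
Qed.
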